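(* Let $d\ge2$ and let $v_1,\dots,v_d\in\mathbb{R}^d$ be linearly independent, $\Delta=\mathrm{conv}(O,v_1,\dots,v_d)$. Let $\mathcal H$ be the hyperplane $\mathrm{Aff}(O,\,v_1+(d-1)v_2,\,v_1+(d-1)v_3,\dots,v_1+(d-1)v_d)$, and let $\delta$ be the simplex that $\mathcal H$ cuts off from $\mathrm{conv}(v_1,\dots,v_d)$ on the side containing $v_1$ (i.e. $\delta=\mathrm{conv}(v_1,\dots,v_d)\cap\mathcal H^{+}$, where $\mathcal H^+$ is the closed half-space bounded by $\mathcal H$ containing $v_1$). Let $\Phi$ be the closure of $$\mathbb{R}_+\delta\setminus\Bigl(\bigl(v_1+\mathbb{R}_+v_1+\mathbb{R}_+v_2+\dots+\mathbb{R}_+v_d\bigr)\cup\Delta\Bigr),$$ and $\Phi'=-\frac1{d-1}v_1+\frac d{d-1}\Phi$ (the image of $\Phi$ under the dilatation with center $v_1$ and factor $d/(d-1)$). Then $\Phi'\subset(d+1)\Delta$.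
   Context: $\mathbb{R}_+\delta$ is the cone $\{t x: t\ge0, x\in\delta\}$; $(d+1)\Delta$ is the dilate of $\Delta$ by $d+1$ with center $O$. *)

(* Defs.v *)
From HB Require Import structures.
From mathcomp Require Import all_boot all_order all_algebra.
From mathcomp Require Import all_classical all_reals all_analysis.
Set Implicit Arguments. Unset Strict Implicit. Unset Printing Implicit Defensive.
Import Order.TTheory GRing.Theory Num.Theory.
Import numFieldNormedType.Exports.
Local Open Scope classical_set_scope.
Local Open Scope ring_scope.

Definition convh (R : realType) (d : nat) (I : finType) (p : I -> 'rV[R]_d)
  : set 'rV[R]_d :=
  [set x | exists l : I -> R, (forall i, 0 <= l i) /\ \sum_i l i = 1 /\
                              x = \sum_i l i *: p i].

Definition affh (R : realType) (d : nat) (I : finType) (p : I -> 'rV[R]_d)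
  : set 'rV[R]_d :=
  [set x | exists l : I -> R, \sum_i l i = 1 /\ x = \sum_i l i *: p i].

Definition rcone (R : realType) (d : nat) (S : set 'rV[R]_d) : set 'rV[R]_d :=
  [set y | exists t x, 0 <= t /\ S x /\ y = t *: x].

Definition dotp (R : realType) (d : nat) (a x : 'rV[R]_d) : R := (x *m a^T) 0 0.

(* Main.v *)
Require Import Defs.
From HB Require Import structures.
From mathcomp Require Import all_boot all_order all_algebra.
From mathcomp Require Import all_classical all_reals all_analysis.
From mathcomp Require Import ring lra.
Import Order.TTheory GRing.Theory Num.Theory.
Import numFieldNormedType.Exports.
Local Open Scope classical_set_scope.
Local Open Scope ring_scope.
Set Implicit Arguments. Unset Strict Implicit.

Lemma cont_lin (R : realType) (d n : nat) (N : 'M[R]_(d, n)) (c : 'I_n -> R) :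
  continuous (fun x : 'rV[R]_d => \sum_i c i * (x *m N) 0 i).
Proof.
apply: (continuous_big (op := +%R)); first exact: add_continuous.
move=> i _ x.
apply: continuousM; first exact: cst_continuous.
have -> : (fun x : 'rV[R]_d => (x *m N) 0 i) = (fun x => \sum_j x 0 j * N j i).
  by apply/funext => y; rewrite mxE.
apply: (continuous_big (op := +%R)); first exact: add_continuous.
move=> j _ y; apply: continuousM; first exact: coord_continuous.
exact: cst_continuous.
Qed.

Lemma closed_lin (R : realType) (d n : nat) (N : 'M[R]_(d, n)) (c : 'I_n -> R) b :
  closed [set x : 'rV[R]_d | b <= \sum_i c i * (x *m N) 0 i].
Proof.
have H := (continuous_closedP _).1 (@cont_lin R d n N c) [set x | b <= x] (closed_ge (y:=b)).
exact: H.
Qed.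

Lemma closure_lin (R : realType) (d n : nat) (N : 'M[R]_(d, n)) (c : 'I_n -> R) b
  (S : set 'rV[R]_d) :
  (forall x, S x -> b <= \sum_i c i * (x *m N) 0 i) ->
  forall x, closure S x -> b <= \sum_i c i * (x *m N) 0 i.
Proof.
move=> HS x.
have E := (closure_id _).1 (@closed_lin R d n N c b).
have : closure S `<=` closure [set x : 'rV[R]_d | b <= \sum_i c i * (x *m N) 0 i].
  by apply: closureS => z /HS.
by rewrite -E; apply.
Qed.

Lemma sum_opt (R : nmodType) (I : finType) (F : option I -> R) :
  \sum_o F o = F None + \sum_i F (Some i).
Proof.
rewrite (bigD1 None) //=; congr (_ + _).
rewrite (reindex_omap Some id) /=; last by case.
by apply: eq_bigl => i; rewrite eqxx.
Qed.

Lemma sum_ind (R : realType) (V : lmodType R) n (i : 'I_n) (F : 'I_n -> V) :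
  \sum_j (j == i)%:R *: F j = F i.
Proof.
rewrite (bigD1 i) //= eqxx scale1r big1 ?addr0 // => j /negbTE ->.
by rewrite scale0r.
Qed.

Lemma sum_indR (R : realType) n (i : 'I_n) (F : 'I_n -> R) :
  \sum_j (j == i)%:R * F j = F i.
Proof.
rewrite (bigD1 i) //= eqxx mul1r big1 ?addr0 // => j /negbTE ->.
by rewrite mul0r.
Qed.

Lemma sum_C2 (R : realType) n (i : 'I_n) (D : R) (F : 'I_n -> R) :
  \sum_k (D * (k == i)%:R - 1) * F k = D * F i - \sum_k F k.
Proof.
under eq_bigr do rewrite mulrBl mul1r -mulrA.
by rewrite sumrB -mulr_sumr sum_indR.
Qed.

Lemma dotpD (R : realType) d (a x y : 'rV[R]_d) : dotp a (x + y) = dotp a x + dotp a y.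
Proof. by rewrite /dotp mulmxDl mxE. Qed.

Lemma dotpZ (R : realType) d (a x : 'rV[R]_d) t : dotp a (t *: x) = t * dotp a x.
Proof. by rewrite /dotp -scalemxAl mxE. Qed.

Lemma dotp0 (R : realType) d (a : 'rV[R]_d) : dotp a 0 = 0.
Proof. by rewrite /dotp mul0mx mxE. Qed.

Lemma dotp_sum (R : realType) d (a : 'rV[R]_d) n (F : 'I_n -> 'rV[R]_d) :
  dotp a (\sum_i F i) = \sum_i dotp a (F i).
Proof. by rewrite /dotp mulmx_suml summxE. Qed.

Lemma sum_rowM (R : realType) d (v : 'I_d -> 'rV[R]_d) (l : 'I_d -> R) :
  \sum_i l i *: v i = (\row_i l i) *m (\matrix_i v i).
Proof. by rewrite mulmx_sum_row; apply: eq_bigr => i _; rewrite mxE rowK. Qed.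

Lemma coordK (R : realType) d (v : 'I_d -> 'rV[R]_d) (l : 'I_d -> R) :
  \matrix_i v i \in unitmx ->
  forall k, ((\sum_i l i *: v i) *m invmx (\matrix_i v i)) 0 k = l k.
Proof. by move=> hu k; rewrite sum_rowM mulmxK // mxE. Qed.

Lemma decomp (R : realType) d (v : 'I_d -> 'rV[R]_d) :
  \matrix_i v i \in unitmx ->
  forall x, x = \sum_i (x *m invmx (\matrix_i v i)) 0 i *: v i.
Proof.
move=> hu x; rewrite sum_rowM.
have -> : \row_i (x *m invmx (\matrix_i v i)) 0 i = x *m invmx (\matrix_i v i).
  by apply/rowP => i; rewrite mxE.
by rewrite mulmxKV.
Qed.

Lemma sum_ind1 (R : realType) n (i : 'I_n) : \sum_j ((j == i)%:R : R) = 1.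
Proof. by rewrite (bigD1 i) //= eqxx big1 ?addr0 // => j /negbTE ->. Qed.

Unset Implicit Arguments.

Theorem mainTheorem9 (R : realType) (d : nat) (hd : (2 <= d)%N)
    (v : 'I_d -> 'rV[R]_d) :
  row_free (\matrix_i v i) ->
  let v1 := v (Ordinal (ltnW hd)) in
  let Delta := convh (fun o : option 'I_d => if o is Some i then v i else 0) in
  let H := affh (fun j : 'I_d =>
                  if j == Ordinal (ltnW hd) then 0 else v1 + (d%:R - 1) *: v j) in
  forall (a : 'rV[R]_d) (b : R),
    (* {x | <a,x> >= b} is the closed half-space bounded by H containing v1 *)
    a != 0 -> [set x | dotp a x = b] = H -> b <= dotp a v1 ->
  let delta := convh v `&` [set x | b <= dotp a x] in
  let Phi := closure (rcone delta `\`
               ([set x | exists t : 'I_d -> R, (forall i, 0 <= t i) /\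
                                   x = v1 + \sum_i t i *: v i] `|` Delta)) in
  let Phi' := [set - (d%:R - 1)^-1 *: v1 + (d%:R / (d%:R - 1)) *: x | x in Phi] in
  Phi' `<=` [set d.+1%:R *: x | x in Delta].
Proof.
move=> hfree v1 Delta H a b a0 HH hb delta Phi Phi' y [x Phix <-].
set M := \matrix_i v i.
have hu : M \in unitmx by rewrite -row_free_unit.
set i1 := Ordinal (ltnW hd).
set D := d%:R : R.
have D2 : 2 <= D by rewrite /D (ler_nat R 2 d).
set e := (D - 1)^-1.
have he : e * (D - 1) = 1 by rewrite mulVf // subr_eq0; apply/eqP => h; move: D2; rewrite h; lra.
have e0 : 0 < e by rewrite invr_gt0; lra.
have Hsub : forall z, H z -> dotp a z = b by move=> z; rewrite -HH.
have b0 : b = 0.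
  rewrite -(dotp0 a); symmetry; apply: Hsub.
  exists (fun j => (j == i1)%:R); split; first by rewrite sum_ind1.
  by rewrite sum_ind eqxx.
subst b.
set al := dotp a v1.
have hvj : forall j, j != i1 -> (D - 1) * dotp a (v j) = - al.
  move=> j hj.
  have : dotp a (v1 + (D - 1) *: v j) = 0.
    apply: Hsub; exists (fun k => (k == j)%:R); split; first by rewrite sum_ind1.
    by rewrite sum_ind (negbTE hj).
  rewrite dotpD dotpZ -/al => h; apply/eqP; rewrite -subr_eq0 opprK addrC h //.
have al0 : 0 < al.
  rewrite lt_neqAle hb andbT; apply/eqP => al0.
  have hall : forall j, dotp a (v j) = 0.
    move=> j; case: (eqVneq j i1) => [->|hj]; first by rewrite -/v1 -/al -al0.
    move: (hvj j hj); rewrite -al0 oppr0 => /eqP; rewrite mulf_eq0 => /orP [|/eqP //].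
    rewrite subr_eq0 => /eqP h; move: D2; rewrite h; lra.
  have hMa : M *m a^T = 0.
    apply/matrixP => i k; rewrite (ord1 k) [RHS]mxE.
    by rewrite -(hall i) /dotp -rowK -/M -row_mul [RHS]mxE.
  move/eqP: a0; apply; apply: trmx_inj; rewrite trmx0.
  by rewrite -(mulKmx hu a^T) hMa mulmx0.
pose kx := fun (z : 'rV[R]_d) (i : 'I_d) => (z *m invmx M) 0 i.
have Spt : forall z, (rcone delta `\`
               ([set x | exists t : 'I_d -> R, (forall i, 0 <= t i) /\
                                   x = v1 + \sum_i t i *: v i] `|` Delta)) z ->
   [/\ forall i, 0 <= kx z i, 0 <= D * kx z i1 - \sum_i kx z i,
       kx z i1 < 1 & 1 < \sum_i kx z i].
  move=> z [hz hn].
  case: hz => t [w [t0 [[cw hw] zE]]].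
  case: cw => l [l0 [l1 wE]].
  have ez : t *: \sum_i l i *: v i = \sum_i (t * l i) *: v i.
    by rewrite scaler_sumr; apply: eq_bigr => i _; rewrite scalerA.
  have kz : forall i, kx z i = t * l i by move=> i; rewrite /kx zE wE ez coordK.
  have sk : \sum_i kx z i = t * \sum_i l i.
    by rewrite mulr_sumr; apply: eq_bigr => i _; rewrite kz.
  have key : 0 <= D * l i1 - \sum_i l i.
    have : (D - 1) * dotp a w = al * (D * l i1 - \sum_i l i).
      rewrite wE dotp_sum mulr_sumr -sum_C2 mulr_sumr; apply: eq_bigr => i _.
      rewrite dotpZ.
      case: (eqVneq i i1) => [->|hi].
        by rewrite -/v1 -/al /=; ring.
      by rewrite mulrCA (hvj i hi) /=; ring.
    move=> h; rewrite -(pmulr_rge0 _ al0) -h; apply: mulr_ge0 => //; lra.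
  split.
  - by move=> i; rewrite kz; apply: mulr_ge0.
  - rewrite kz sk; nra.
  - rewrite ltNge; apply/negP => h1; apply: hn; left.
    exists (fun i => kx z i - (i == i1)%:R); split.
      move=> i; case: (eqVneq i i1) => [->|hi] /=; first by rewrite subr_ge0.
      by rewrite subr0 kz; apply: mulr_ge0.
    under eq_bigr do rewrite scalerBl.
    by rewrite sumrB sum_ind -/v1 [RHS]addrC subrK [LHS](decomp hu).
  - rewrite ltNge; apply/negP => h1; apply: hn; right.
    exists (fun o => if o is Some i then kx z i else 1 - \sum_i kx z i); split.
      by case=> [i|]; [rewrite kz; apply: mulr_ge0 | rewrite subr_ge0].
    split; first by rewrite sum_opt subrK.
    by rewrite sum_opt /= scaler0 add0r [LHS](decomp hu).
have C1 : forall i, 0 <= kx x i.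
  move=> i; have := @closure_lin R d d (invmx M) (fun k => (k == i)%:R) 0 _ _ x Phix.
  rewrite sum_indR; apply => z /Spt [+ _ _ _] => /(_ i); by rewrite sum_indR.
have C2 : 0 <= D * kx x i1 - \sum_i kx x i.
  have := @closure_lin R d d (invmx M) (fun k => D * (k == i1)%:R - 1) 0 _ _ x Phix.
  rewrite sum_C2; apply => z /Spt [_ + _ _]; by rewrite sum_C2.
have C3 : kx x i1 <= 1.
  have := @closure_lin R d d (invmx M) (fun k => - (k == i1)%:R) (-1) _ _ x Phix.
  have E : forall z, \sum_k - (k == i1)%:R * (z *m invmx M) 0 k = - kx z i1.
    by move=> z; under eq_bigr do rewrite mulNr; rewrite sumrN sum_indR.
  rewrite E lerN2; apply => z /Spt [_ _ + _]; rewrite E lerN2; exact: ltW.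
have C4 : 1 <= \sum_i kx x i.
  have := @closure_lin R d d (invmx M) (fun k => 1) 1 _ _ x Phix.
  have E : forall z, \sum_k 1 * (z *m invmx M) 0 k = \sum_i kx z i.
    by move=> z; under eq_bigr do rewrite mul1r.
  rewrite E; apply => z /Spt [_ _ _ +]; rewrite E; exact: ltW.
pose ky := fun i => D / (D - 1) * kx x i - e * (i == i1)%:R.
have xd : \sum_i kx x i *: v i = x by rewrite [RHS](decomp hu).
have yE : - e *: v1 + (D / (D - 1)) *: x = \sum_i ky i *: v i.
  rewrite (eq_bigr (fun i => (D / (D - 1)) *: (kx x i *: v i) - e *: ((i == i1)%:R *: v i))); last by move=> i _; rewrite scalerBl !scalerA.
  by rewrite sumrB -!scaler_sumr sum_ind -/v1 xd scaleNr addrC.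
have ky0 : forall i, 0 <= ky i.
  move=> i; rewrite /ky; case: (eqVneq i i1) => [->|hi] /=.
    have h : 1 <= D * kx x i1 by lra.
    have h2 : 0 <= D * kx x i1 - 1 by rewrite subr_ge0.
    have := mulr_ge0 (ltW e0) h2; rewrite -/e mulr1; nra.
  have := mulr_ge0 (ltW e0) (C1 i); rewrite -/e mulr0 subr0; nra.
have Sy : \sum_i ky i = D * e * \sum_i kx x i - e.
  by rewrite sumrB -mulr_sumr -mulr_sumr sum_ind1 mulr1.
have SyD : \sum_i ky i <= D + 1.
  rewrite Sy; have : \sum_i kx x i <= D by nra.
  move=> hT; nra.
have D10 : D + 1 != 0 by apply/eqP; lra.
have d1 : d.+1%:R = D + 1 :> R by rewrite -natr1.
pose lam := fun o : option 'I_d => if o is Some i then ky i / (D + 1)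
                                   else 1 - (\sum_i ky i) / (D + 1).
exists (\sum_o lam o *: (if o is Some i then v i else 0)).
  exists lam; split.
    case=> [i|] /=; first by apply: divr_ge0 => //; lra.
    rewrite subr_ge0 ler_pdivrMr ?mul1r //; lra.
  by split; first by rewrite sum_opt /= -mulr_suml subrK.
rewrite d1 sum_opt /= scaler0 add0r scaler_sumr yE; apply: eq_bigr => i _.
by rewrite scalerA mulrC divfK.
Qed.
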